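(* Let $n>0$ and $d>0$ be integers and let $k,r$ be integers with $n=kd+r$. If $k\geq |r|+1$, then $d\in A_n$.
   Context: A walk is a finite sequence $z_0,z_1,\dots,z_l$ of Gaussian integers with $|z_{j+1}-z_j|=1$ for all $0\le j<l$. For natural numbers $n,d$, $n$ is called $d$-avoidable if there exists a walk $(z_j)$ and indices $r,s$ with $z_r-z_s=n$ such that $z_t-z_u\neq d$ for all indices $t,u$. $A_n$ denotes the set of all $d\in\mathbb{N}$ such that $n$ is not $d$-avoidable. *)

(* Defs.v *)
(* Gaussian integers a+bi are represented as pairs (a,b) : Z*Z. *)
From Stdlib Require Import ZArith Lia.
Open Scope Z_scope.

Definition gauss := (Z * Z)%type.

Definition gsub (z w : gauss) : gauss := (fst z - fst w, snd z - snd w).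

Definition gnat (m : nat) : gauss := (Z.of_nat m, 0).

Definition unit_step (z : gauss) : Prop := fst z * fst z + snd z * snd z = 1.

Definition is_walk (l : nat) (z : nat -> gauss) : Prop :=
  forall j : nat, (j < l)%nat -> unit_step (gsub (z (S j)) (z j)).

Definition avoidable (n d : nat) : Prop :=
  exists (l : nat) (z : nat -> gauss), is_walk l z /\
    (exists r s : nat, (r <= l)%nat /\ (s <= l)%nat /\ gsub (z r) (z s) = gnat n) /\
    (forall t u : nat, (t <= l)%nat -> (u <= l)%nat -> gsub (z t) (z u) <> gnat d).

Definition in_A (n d : nat) : Prop := ~ avoidable n d.

(* Main.v *)
Require Import Defs.
From Stdlib Require Import ZArith Lia Bool Classical.
Open Scope Z_scope.

Lemma unit_cases (a b : Z) : a*a + b*b = 1 ->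
  (a = 1 /\ b = 0) \/ (a = -1 /\ b = 0) \/ (a = 0 /\ b = 1) \/ (a = 0 /\ b = -1).
Proof.
  intros H. assert (-1 <= a <= 1) by nia. assert (-1 <= b <= 1) by nia.
  assert (a = -1 \/ a = 0 \/ a = 1) as Ha by lia.
  assert (b = -1 \/ b = 0 \/ b = 1) as Hb by lia.
  destruct Ha as [ -> | [ -> | -> ] ]; destruct Hb as [ -> | [ -> | -> ] ]; simpl in H; lia.
Qed.

Definition crossb (a b : gauss) (x y : Z) : bool :=
  (fst a =? fst b) && (x <=? fst a) &&
  (((snd a =? y) && (snd b =? y+1)) || ((snd a =? y+1) && (snd b =? y))).
Definition chi (x y : Z) (a : gauss) : bool := (snd a =? y) && (x <=? fst a).

Ltac zdestr :=
  repeat (match goal with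
  | |- context [Z.eqb ?a ?b] => destruct (Z.eqb_spec a b)
  | |- context [Z.leb ?a ?b] => destruct (Z.leb_spec a b)
  end; simpl; try reflexivity; try (exfalso; lia)).

Lemma edge_vert (a b : gauss) x y :
  unit_step (gsub b a) ->
  (fst a <> x \/ snd a <> y+1) -> (fst b <> x \/ snd b <> y+1) ->
  xorb (crossb a b x y) (crossb a b x (y+1)) = xorb (chi x (y+1) a) (chi x (y+1) b).
Proof.
  destruct a as [ax ay], b as [bx by0]; unfold unit_step, gsub, crossb, chi; simpl.
  intros U H1 H2.
  destruct (unit_cases _ _ U) as [[E1 E2]|[[E1 E2]|[[E1 E2]|[E1 E2]]]];
  assert (bx = ax + (bx - ax)) as -> by lia; assert (by0 = ay + (by0 - ay)) as -> by lia;
  rewrite E1, E2 in *; zdestr.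
Qed.

Lemma edge_hor (a b : gauss) x y :
  unit_step (gsub b a) ->
  (fst a <> x \/ snd a <> y) -> (fst b <> x \/ snd b <> y) ->
  crossb a b x y = crossb a b (x+1) y.
Proof.
  destruct a as [ax ay], b as [bx by0]; unfold unit_step, gsub, crossb, chi; simpl.
  intros U H1 H2.
  destruct (unit_cases _ _ U) as [[E1 E2]|[[E1 E2]|[[E1 E2]|[E1 E2]]]];
  assert (bx = ax + (bx - ax)) as -> by lia; assert (by0 = ay + (by0 - ay)) as -> by lia;
  rewrite E1, E2 in *; zdestr.
Qed.

Fixpoint cnt (f : nat -> bool) (n : nat) : bool :=
  match n with O => false | S m => xorb (cnt f m) (f m) end.

Lemma cnt_xor f g n : cnt (fun i => xorb (f i) (g i)) n = xorb (cnt f n) (cnt g n).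
Proof. induction n; simpl; auto. rewrite IHn.
  destruct (cnt f n), (cnt g n), (f n), (g n); reflexivity. Qed.

Lemma cnt_tele (h : nat -> bool) n : cnt (fun i => xorb (h i) (h (S i))) n = xorb (h O) (h n).
Proof. induction n; simpl. destruct (h O); reflexivity. rewrite IHn.
  destruct (h O), (h n), (h (S n)); reflexivity. Qed.

Lemma cnt_ext f g n : (forall i, (i < n)%nat -> f i = g i) -> cnt f n = cnt g n.
Proof. induction n; intros H; simpl; auto. rewrite IHn by (intros; apply H; lia).
  rewrite H by lia. reflexivity. Qed.

Lemma cnt_false f n : (forall i, (i < n)%nat -> f i = false) -> cnt f n = false.
Proof. induction n; intros H; simpl; auto. rewrite IHn by (intros; apply H; lia).
  rewrite H by lia. reflexivity. Qed.

Definition pi_ (s : nat -> gauss) (l : nat) (p : gauss) : bool :=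
  cnt (fun i => crossb (s i) (s (S i)) (fst p) (snd p)) l.
Definition Fside (s : nat -> gauss) (l : nat) (p : gauss) : bool :=
  xorb (pi_ s l p) (xorb ((snd (s O) <=? snd p) && (fst p <=? fst (s O)))
                         ((snd p <=? snd (s l) - 1) && (fst p <=? fst (s l)))).
Definition free (s : nat -> gauss) (l : nat) (p : gauss) : Prop :=
  (forall i, (i <= l)%nat -> s i <> p) /\
  ~ (fst p = fst (s O) /\ snd (s O) <= snd p) /\
  ~ (fst p = fst (s l) /\ snd p <= snd (s l)).

Lemma neq_pair (a p : gauss) : a <> p -> fst a <> fst p \/ snd a <> snd p.
Proof. destruct a, p; simpl; intros H. destruct (Z.eq_dec z z1); [|left; auto].
  right; intros E; apply H; subst; reflexivity. Qed.

Lemma inv_right s l x y : is_walk l s -> free s l (x, y) -> free s l (x+1, y) ->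
  Fside s l (x, y) = Fside s l (x+1, y).
Proof.
  intros W [F1 [F2 F3]] [G1 [G2 G3]]. unfold Fside, pi_; simpl in *.
  rewrite (cnt_ext (fun i => crossb (s i) (s (S i)) x y)
                   (fun i => crossb (s i) (s (S i)) (x+1) y)).
  2:{ intros i Hi. apply edge_hor. apply W; auto.
      apply (neq_pair _ (x,y)); apply F1; lia.
      apply (neq_pair _ (x,y)); apply F1; lia. }
  f_equal. destruct (s O) as [a0 b0], (s l) as [a1 b1]; simpl in *.
  zdestr.
Qed.

Lemma inv_up s l x y : is_walk l s -> free s l (x, y) -> free s l (x, y+1) ->
  Fside s l (x, y) = Fside s l (x, y+1).
Proof.
  intros W [F1 [F2 F3]] [G1 [G2 G3]]. unfold Fside, pi_; simpl in *.
  assert (E : cnt (fun i => crossb (s i) (s (S i)) x (y+1)) l =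
     xorb (cnt (fun i => crossb (s i) (s (S i)) x y) l)
          (xorb (chi x (y+1) (s O)) (chi x (y+1) (s l)))).
  { rewrite <- cnt_tele with (h := fun i => chi x (y+1) (s i)).
    rewrite (cnt_ext (fun i => xorb (chi x (y+1) (s i)) (chi x (y+1) (s (S i))))
      (fun i => xorb (crossb (s i) (s (S i)) x y) (crossb (s i) (s (S i)) x (y+1)))).
    2:{ intros i Hi. symmetry. apply edge_vert. apply W; auto.
      apply (neq_pair _ (x,y+1)); apply G1; lia.
      apply (neq_pair _ (x,y+1)); apply G1; lia. }
    rewrite cnt_xor. destruct (cnt _ l), (cnt _ l); reflexivity. }
  rewrite E. unfold chi.
  destruct (cnt (fun i => crossb (s i) (s (S i)) x y) l);
  destruct (s O) as [a0 b0], (s l) as [a1 b1]; simpl in *; zdestr.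
Qed.

Lemma inv_step s l p p' : is_walk l s -> free s l p -> free s l p' ->
  unit_step (gsub p' p) -> Fside s l p = Fside s l p'.
Proof.
  intros W Hp Hp' U. destruct p as [x y], p' as [x' y']. unfold unit_step, gsub in U; simpl in U.
  destruct (unit_cases _ _ U) as [[E1 E2]|[[E1 E2]|[[E1 E2]|[E1 E2]]]].
  - assert (x' = x+1) as -> by lia; assert (y' = y) as -> by lia. apply inv_right; auto.
  - assert (x = x'+1) as -> by lia; assert (y' = y) as -> by lia. symmetry; apply inv_right; auto.
  - assert (x' = x) as -> by lia; assert (y' = y+1) as -> by lia. apply inv_up; auto.
  - assert (x' = x) as -> by lia; assert (y = y'+1) as -> by lia. symmetry; apply inv_up; auto.
Qed.

Lemma walk_const s l m X : is_walk l s -> is_walk m X -> (forall j, (j <= m)%nat -> free s l (X j)) ->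
  forall j, (j <= m)%nat -> Fside s l (X j) = Fside s l (X O).
Proof.
  intros W WX F j. induction j; intros Hj; auto.
  rewrite <- IHj by lia. symmetry. apply inv_step; [auto | apply F; lia | apply F; lia | apply WX; lia].
Qed.

Lemma Fside_top s l c : (forall i, (i <= l)%nat -> snd (s i) <= snd (s O)) ->
  Fside s l (fst (s O) + c, snd (s O)) = (c <=? 0).
Proof.
  intros H. unfold Fside, pi_. rewrite cnt_false.
  2:{ intros i Hi. unfold crossb. simpl.
      assert (snd (s i) <= snd (s O)) by (apply H; lia).
      assert (snd (s (S i)) <= snd (s O)) by (apply H; lia).
      destruct (Z.eqb_spec (snd (s (S i))) (snd (s O) + 1)); [lia|].
      destruct (Z.eqb_spec (snd (s i)) (snd (s O) + 1)); [lia|].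
      repeat rewrite andb_false_r. reflexivity. }
  assert (snd (s l) <= snd (s O)) by (apply H; lia).
  simpl. destruct (s O) as [a0 b0]; simpl in *. zdestr.
Qed.

Lemma unit_sym a b : unit_step (gsub a b) -> unit_step (gsub b a).
Proof. unfold unit_step, gsub; simpl; intros; nia. Qed.

Lemma exists_max (f : nat -> Z) l : exists i, (i <= l)%nat /\ forall j, (j <= l)%nat -> f j <= f i.
Proof.
  induction l. exists O; split; auto. intros j Hj. assert (j = O) as -> by lia. lia.
  destruct IHl as [i [Hi H]]. destruct (Z_le_gt_dec (f (S l)) (f i)).
  - exists i; split; [lia|]. intros j Hj. destruct (Nat.eq_dec j (S l)) as [->|]; auto. apply H; lia.
  - exists (S l); split; auto. intros j Hj. destruct (Nat.eq_dec j (S l)) as [->|]; [lia|].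
    specialize (H j ltac:(lia)); lia.
Qed.

Lemma exists_min (f : nat -> Z) l : exists i, (i <= l)%nat /\ forall j, (j <= l)%nat -> f i <= f j.
Proof.
  destruct (exists_max (fun j => - f j) l) as [i [Hi H]]. exists i; split; auto.
  intros j Hj; specialize (H j Hj); lia.
Qed.

Definition sub (z : nat -> gauss) (a b : nat) : nat -> gauss :=
  fun i => if (a <=? b)%nat then z (a + i)%nat else z (a - i)%nat.
Definition sublen (a b : nat) : nat := if (a <=? b)%nat then (b - a)%nat else (a - b)%nat.

Lemma sub_walk l z a b : is_walk l z -> (a <= l)%nat -> (b <= l)%nat -> is_walk (sublen a b) (sub z a b).
Proof.
  unfold sub, sublen; intros W Ha Hb j Hj. destruct (Nat.leb_spec a b).
  - replace (a + S j)%nat with (S (a + j)) by lia. apply W; lia.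
  - apply unit_sym. replace (a - j)%nat with (S (a - S j)) by lia. apply W; lia.
Qed.

Lemma sub_pts l z a b : (a <= l)%nat -> (b <= l)%nat ->
  forall i, (i <= sublen a b)%nat -> exists j, (j <= l)%nat /\ sub z a b i = z j.
Proof.
  unfold sub, sublen; intros Ha Hb i Hi. destruct (Nat.leb_spec a b).
  - exists (a + i)%nat; split; auto; lia.
  - exists (a - i)%nat; split; auto; lia.
Qed.

Lemma sub_0 z a b : sub z a b O = z a.
Proof. unfold sub. destruct (Nat.leb a b); f_equal; lia. Qed.
Lemma sub_end z a b : sub z a b (sublen a b) = z b.
Proof. unfold sub, sublen. destruct (Nat.leb_spec a b); f_equal; lia. Qed.

Definition chord (l : nat) (z : nat -> gauss) (c : Z) : Prop :=
  exists t u, (t <= l)%nat /\ (u <= l)%nat /\ gsub (z t) (z u) = (c, 0).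

Definition shift (z : nat -> gauss) (c : Z) : nat -> gauss := fun j => (fst (z j) + c, snd (z j)).

Lemma shift_walk l z c : is_walk l z -> is_walk l (shift z c).
Proof.
  intros W j Hj. specialize (W j Hj). unfold unit_step, gsub, shift in *; simpl in *.
  replace (fst (z (S j)) + c - (fst (z j) + c)) with (fst (z (S j)) - fst (z j)) by lia. auto.
Qed.

Lemma core l z N k : is_walk l z -> 0 < N -> 2 <= k -> chord l z (k*N) ->
  ~ chord l z N -> ~ chord l z ((k-1)*N) -> False.
Proof.
  intros W HN Hk [t0 [u0 [Ht0 [Hu0 Hc]]]] NC1 NC2.
  destruct (exists_max (fun i => snd (z i)) l) as [iT [HiT HT]].
  destruct (exists_min (fun i => snd (z i)) l) as [iB [HiB HB]].
  set (s := sub z iT iB). set (ls := sublen iT iB).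
  assert (Ws : is_walk ls s) by (apply sub_walk with l; auto).
  assert (Ps := sub_pts l z iT iB HiT HiB). fold s ls in Ps.
  assert (S0 : s O = z iT) by apply sub_0.
  assert (Se : s ls = z iB) by apply sub_end.
  assert (Top : forall i, (i <= ls)%nat -> snd (s i) <= snd (s O)).
  { intros i Hi. destruct (Ps i Hi) as [j [Hj ->]]. rewrite S0. apply HT; auto. }
  assert (FR : forall c, (forall t u, (t <= l)%nat -> (u <= l)%nat -> gsub (z t) (z u) <> (c, 0)) ->
            forall j, (j <= l)%nat -> free s ls (shift z c j)).
  { intros c NC j Hj. unfold free, shift; simpl. split; [|split].
    - intros i Hi E. destruct (Ps i Hi) as [j' [Hj' E']]. rewrite E' in E.
      apply (NC j' j Hj' Hj). unfold gsub; rewrite E; simpl. f_equal; lia.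
    - rewrite S0. intros [E1 E2]. assert (snd (z j) <= snd (z iT)) by (apply HT; auto).
      apply (NC iT j HiT Hj). unfold gsub. f_equal; lia.
    - rewrite Se. intros [E1 E2]. assert (snd (z iB) <= snd (z j)) by (apply HB; auto).
      apply (NC iB j HiB Hj). unfold gsub. f_equal; lia. }
  assert (V : forall c, (forall t u, (t <= l)%nat -> (u <= l)%nat -> gsub (z t) (z u) <> (c, 0)) ->
            forall j, (j <= l)%nat -> Fside s ls (shift z c j) = (c <=? 0)).
  { intros c NC j Hj. rewrite (walk_const s ls l (shift z c) Ws (shift_walk l z c W) (FR c NC) j Hj).
    rewrite <- (walk_const s ls l (shift z c) Ws (shift_walk l z c W) (FR c NC) iT HiT).
    unfold shift. rewrite <- S0. apply Fside_top; auto. }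
  assert (A1 := V N ltac:(intros t u Ht Hu E; apply NC1; exists t, u; auto) u0 Hu0).
  assert (A2 := V (-((k-1)*N)) ltac:(intros t u Ht Hu E; apply NC2; exists u, t; repeat split; auto;
     unfold gsub in *; inversion E; f_equal; lia) t0 Ht0).
  unfold gsub in Hc. inversion Hc.
  assert (shift z N u0 = shift z (- ((k - 1) * N)) t0) as Eq.
  { unfold shift. f_equal; lia. }
  rewrite Eq in A1. rewrite A1 in A2.
  destruct (Z.leb_spec N 0); destruct (Z.leb_spec (- ((k - 1) * N)) 0); try discriminate; nia.
Qed.

Lemma univ_all (n : nat) : forall m, (m <= n)%nat -> forall l z N, is_walk l z -> 0 < N ->
  chord l z (Z.of_nat (S m) * N) -> chord l z N.
Proof.
  induction n; intros m Hm l z N W HN Hc.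
  - assert (m = O) as -> by lia. change (Z.of_nat 1) with 1 in Hc. rewrite Z.mul_1_l in Hc. auto.
  - destruct m as [|m]. { change (Z.of_nat 1) with 1 in Hc. rewrite Z.mul_1_l in Hc. auto. }
    destruct (classic (chord l z N)) as [H|H]; auto.
    destruct (classic (chord l z (Z.of_nat (S m) * N))) as [H2|H2].
    + apply (IHn m); auto; lia.
    + exfalso. apply (core l z N (Z.of_nat (S (S m)))); auto. lia.
      replace (Z.of_nat (S (S m)) - 1) with (Z.of_nat (S m)) by lia. auto.
Qed.

Lemma casework (k d r t s a1x a1y ux uy b1x b1y vx vy : Z) :
  1 <= k -> Z.abs r + 1 <= k -> 0 <= t <= k -> 0 <= s <= k ->
  ux*ux+uy*uy = 1 -> vx*vx+vy*vy=1 ->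
  (k*b1x + s*vx) - (k*a1x + t*ux) = k*d + r ->
  (k*b1y + s*vy) - (k*a1y + t*uy) = 0 ->
  exists (X Y : gauss), (X = (a1x,a1y) \/ X = (a1x+ux,a1y+uy)) /\
     (Y = (b1x,b1y) \/ Y = (b1x+vx,b1y+vy)) /\ gsub Y X = (d, 0).
Proof.
  intros Hk Hr Ht Hs U V Ex Ey.
  assert (Em : k * (b1x - a1x - d) = r + t*ux - s*vx) by nia.
  assert (Emy : k * (b1y - a1y) = t*uy - s*vy) by nia.
  clear Ex Ey.
  destruct (unit_cases _ _ U) as [[-> ->]|[[-> ->]|[[-> ->]|[-> ->]]]];
  destruct (unit_cases _ _ V) as [[-> ->]|[[-> ->]|[[-> ->]|[-> ->]]]];
  (assert (-2 <= b1x - a1x - d <= 2) by nia);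
  (assert (-2 <= b1y - a1y <= 2) by nia);
  (assert (b1x - a1x - d = -2 \/ b1x - a1x - d = -1 \/ b1x - a1x - d = 0 \/ b1x - a1x - d = 1 \/ b1x - a1x - d = 2) as HM by lia);
  (assert (b1y - a1y = -2 \/ b1y - a1y = -1 \/ b1y - a1y = 0 \/ b1y - a1y = 1 \/ b1y - a1y = 2) as HMy by lia);
  destruct HM as [HM|[HM|[HM|[HM|HM]]]]; rewrite HM in Em;
  destruct HMy as [HMy|[HMy|[HMy|[HMy|HMy]]]]; rewrite HMy in Emy;
  first
  [ do 2 eexists; split; [left; reflexivity| split; [left; reflexivity | unfold gsub; simpl; f_equal; lia]]
  | do 2 eexists; split; [left; reflexivity| split; [right; reflexivity | unfold gsub; simpl; f_equal; lia]]
  | do 2 eexists; split; [right; reflexivity| split; [left; reflexivity | unfold gsub; simpl; f_equal; lia]]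
  | do 2 eexists; split; [right; reflexivity| split; [right; reflexivity | unfold gsub; simpl; f_equal; lia]] ].
Qed.

Definition scaleW (k : Z) (z : nat -> gauss) (i : nat) : gauss :=
  let kn := Z.to_nat k in
  let a := (i / kn)%nat in let t := Z.of_nat (i mod kn) in
  (k * fst (z a) + t * (fst (z (S a)) - fst (z a)), k * snd (z a) + t * (snd (z (S a)) - snd (z a))).

Lemma divmod_eq (kn i a t : nat) : (t < kn)%nat -> i = (kn * a + t)%nat -> (i / kn = a /\ i mod kn = t)%nat.
Proof. intros Ht ->. split. symmetry; apply Nat.div_unique with t; lia. symmetry; apply Nat.mod_unique with a; lia. Qed.

Lemma scale_step k z i : 1 <= k -> gsub (scaleW k z (S i)) (scaleW k z i) = gsub (z (S (i / Z.to_nat k)%nat)) (z (i / Z.to_nat k)%nat).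
Proof.
  intros Hk. unfold scaleW. set (kn := Z.to_nat k).
  assert (Hkn : (0 < kn)%nat) by lia.
  assert (Ek : k = Z.of_nat kn) by lia.
  set (a := (i / kn)%nat). set (t := (i mod kn)%nat).
  assert (Hi : i = (kn * a + t)%nat) by (apply Nat.div_mod; lia).
  assert (Ht : (t < kn)%nat) by (apply Nat.mod_upper_bound; lia).
  destruct (Nat.eq_dec (S t) kn) as [E|E].
  - destruct (divmod_eq kn (S i) (S a) 0 Hkn ltac:(lia)) as [-> ->].
    assert (Zt : Z.of_nat t = k - 1) by lia. rewrite Zt.
    unfold gsub; simpl. f_equal; ring.
  - destruct (divmod_eq kn (S i) a (S t) ltac:(lia) ltac:(lia)) as [-> ->].
    rewrite Nat2Z.inj_succ. unfold gsub; simpl. f_equal; ring.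
Qed.

Lemma scale_walk k l z : 1 <= k -> is_walk l z -> is_walk (Z.to_nat k * l) (scaleW k z).
Proof.
  intros Hk W i Hi. rewrite scale_step by auto. apply W.
  apply Nat.div_lt_upper_bound; lia.
Qed.

Lemma scale_mult k z a : 1 <= k -> scaleW k z (Z.to_nat k * a) = (k * fst (z a), k * snd (z a)).
Proof.
  intros Hk. unfold scaleW.
  destruct (divmod_eq (Z.to_nat k) (Z.to_nat k * a) a 0 ltac:(lia) ltac:(lia)) as [-> ->].
  simpl. f_equal; ring.
Qed.

Lemma scale_decomp k l z i : 1 <= k -> (1 <= l)%nat -> (i <= Z.to_nat k * l)%nat ->
  exists a t, (a < l)%nat /\ 0 <= t <= k /\
   scaleW k z i = (k * fst (z a) + t * (fst (z (S a)) - fst (z a)), k * snd (z a) + t * (snd (z (S a)) - snd (z a))).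
Proof.
  intros Hk Hl Hi. set (kn := Z.to_nat k).
  destruct (Nat.eq_dec i (kn * l)) as [E|E].
  - exists (l - 1)%nat, k. split; [lia|split; [lia|]].
    rewrite E. unfold kn. rewrite scale_mult by auto.
    replace (S (l - 1)) with l by lia. f_equal; ring.
  - exists (i / kn)%nat, (Z.of_nat (i mod kn)). split; [|split].
    + apply Nat.div_lt_upper_bound; lia.
    + assert (i mod kn < kn)%nat by (apply Nat.mod_upper_bound; lia). lia.
    + reflexivity.
Qed.

Theorem mainTheorem2 (n d : nat) (k r : Z) :
  (0 < n)%nat -> (0 < d)%nat ->
  Z.of_nat n = k * Z.of_nat d + r ->
  Z.abs r + 1 <= k ->
  in_A n d.
Proof.
  intros Hn Hd Hnk Hrk [l [z [W [[r0 [s0 [Hr0 [Hs0 Hc]]]] Hav]]]].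
  assert (Hk : 1 <= k) by lia.
  set (kn := Z.to_nat k).
  assert (Ek : k = Z.of_nat kn) by lia.
  assert (Hl : (1 <= l)%nat).
  { destruct l; [|lia]. assert (r0 = O) as -> by lia. assert (s0 = O) as -> by lia.
    unfold gsub, gnat in Hc. inversion Hc. lia. }
  assert (Ch : chord (kn * l) (scaleW k z) (Z.of_nat (S (kn - 1)) * Z.of_nat n)).
  { exists (kn * r0)%nat, (kn * s0)%nat. split; [apply Nat.mul_le_mono_l; auto|split; [apply Nat.mul_le_mono_l; auto|]].
    unfold kn. rewrite !scale_mult by auto. unfold gsub, gnat in Hc. unfold gsub.
    injection Hc as H0 H1. replace (Z.of_nat (S (Z.to_nat k - 1))) with k by lia.
    cbn [fst snd]. rewrite <- H0. f_equal; nia. }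
  destruct (univ_all (kn - 1) (kn - 1) (le_n _) (kn * l) (scaleW k z) (Z.of_nat n)
     (scale_walk k l z Hk W) ltac:(lia) Ch) as [i [j [Hi [Hj Hij]]]].
  destruct (scale_decomp k l z i Hk Hl Hi) as [a [t [Ha [Ht Ei]]]].
  destruct (scale_decomp k l z j Hk Hl Hj) as [b [s [Hb [Hs Ej]]]].
  rewrite Ei, Ej in Hij. unfold gsub in Hij; simpl in Hij. inversion Hij as [[Hx Hy]].
  assert (Ua := W a Ha). assert (Ub := W b Hb). unfold unit_step, gsub in Ua, Ub; simpl in Ua, Ub.
  destruct (casework k (Z.of_nat d) r s t
     (fst (z b)) (snd (z b)) (fst (z (S b)) - fst (z b)) (snd (z (S b)) - snd (z b))
     (fst (z a)) (snd (z a)) (fst (z (S a)) - fst (z a)) (snd (z (S a)) - snd (z a))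
     Hk ltac:(lia) Hs Ht Ub Ua ltac:(lia) ltac:(lia)) as [X [Y [HX [HY HXY]]]].
  assert (PX : exists x, (x <= l)%nat /\ X = z x).
  { destruct HX as [->| ->]; [exists b | exists (S b)]; split; try lia;
    destruct (z b), (z (S b)); simpl; f_equal; ring. }
  assert (PY : exists y, (y <= l)%nat /\ Y = z y).
  { destruct HY as [->| ->]; [exists a | exists (S a)]; split; try lia;
    destruct (z a), (z (S a)); simpl; f_equal; ring. }
  destruct PX as [x [Hx' ->]], PY as [y [Hy' ->]].
  apply (Hav y x Hy' Hx'). unfold gnat. exact HXY.
Qed.
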